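(* Let $(M,\Sigma_M,\mu,T_t)$ be a measure-preserving deterministic system. Then the following two conditions are equivalent: (a) there do not exist $n\in\mathbb{R}^{+}$ and $C\in\Sigma_M$ with $0<\mu(C)<1$ such that $T_n(C)=C$ except for a set of $\mu$-measure zero; (b) for every nontrivial finite-valued observation function $\Phi:M\to M_O$ and every $k\in\mathbb{R}^{+}$, the stochastic process $\{Z_t;\,t\in\mathbb{R}\}:=\{\Phi\circ T_t;\,t\in\mathbb{R}\}$ (random variables on $(M,\Sigma_M,\mu)$) has values $o_i,o_j\in M_O$ with $$0<P\{Z_{t+k}=o_j\mid Z_t=o_i\}<1 .$$
   Context: A (continuous-time) deterministic system is a quadruple $(M,\Sigma_M,\mu,T_t)$ where $(M,\Sigma_M,\mu)$ is a probability space and $T_t:M\to M$, $t\in\mathbb{R}$, are measurable maps with $T_{t_1+t_2}(m)=T_{t_2}(T_{t_1}(m))$ for all $m\in M$ and $t_1,t_2\in\mathbb{R}$, and with $(t,m)\mapsto T_t(m)$ jointly measurable. It is measure-preserving if $\mu(T_t(A))=\mu(A)$ for all $A\in\Sigma_M$ and all $t\in\mathbb{R}$. An observation function is a measurable map $\Phi:M\to M_O$ into a measurable space. It is finite-valued if it takes only finitely many values $o_1,\dots,o_r$ and $\mu(\{m:\Phi(m)=o_i\})>0$ for each $i$; it is nontrivial if $r\ge 2$. Here $P\{Z_{t+k}=o_j\mid Z_t=o_i\}=\mu(\{m:\Phi(T_{t+k}m)=o_j,\ \Phi(T_t m)=o_i\})/\mu(\{m:\Phi(T_t m)=o_i\})$.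 *)

(* Defs.v *)
From HB Require Import structures.
From mathcomp Require Import all_boot all_order all_algebra.
From mathcomp Require Import all_classical all_reals all_analysis.
Set Implicit Arguments. Unset Strict Implicit. Unset Printing Implicit Defensive.
Import Order.TTheory GRing.Theory Num.Theory.
Local Open Scope classical_set_scope.
Local Open Scope ring_scope.

Definition det_system d (M : measurableType d) (R : realType)
  (T : R -> M -> M) : Prop :=
  [/\ (forall t, measurable_fun setT (T t)),
      (forall t1 t2 m, T (t1 + t2) m = T t2 (T t1 m)) &
      measurable_fun setT (fun p : R * M => T p.1 p.2)].

(* measure-preserving: mu(T_t(A)) = mu(A) for all measurable A and all t
   (the image T_t(A) being measurable, as implicit in the paper). *)
Definition measure_preserving d (M : measurableType d) (R : realType)
  (P : probability M R) (T : R -> M -> M) : Prop :=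
  forall t (A : set M), measurable A ->
    measurable (T t @` A) /\ P (T t @` A) = P A.

Definition finite_valued d (M : measurableType d) (R : realType)
  (P : probability M R) d' (O : measurableType d') (Phi : M -> O) : Prop :=
  finite_set (range Phi) /\
  (forall o, range Phi o ->
     measurable (Phi @^-1` [set o]) /\ (0 < P (Phi @^-1` [set o]))%E).

Definition nontrivial_obs (M : Type) (O : Type) (Phi : M -> O) : Prop :=
  exists o1 o2, [/\ range Phi o1, range Phi o2 & o1 <> o2].

Definition cond_prob d (M : measurableType d) (R : realType)
  (P : probability M R) (T : R -> M -> M) (O : Type) (Phi : M -> O)
  (t k : R) (oi oj : O) : R :=
  fine (P [set m | Phi (T (t + k) m) = oj /\ Phi (T t m) = oi]) /
  fine (P [set m | Phi (T t m) = oi]).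

(* Main.v *)
Require Import Defs.
From HB Require Import structures.
From mathcomp Require Import all_boot all_order all_algebra.
From mathcomp Require Import all_classical all_reals all_analysis.
From mathcomp Require Import lra ring.
Import Order.TTheory GRing.Theory Num.Theory.
Local Open Scope classical_set_scope.
Local Open Scope ring_scope.

Lemma PE {d} {M : measurableType d} {R : realType} (P : probability M R) {X : set M} :
  measurable X -> P X = (fine (P X))%:E.
Proof. by move=> mX; rewrite fineK// fin_num_measure. Qed.

Lemma fP_ge0 {d} {M : measurableType d} {R : realType} (P : probability M R) (X : set M) :
  (0 <= fine (P X))%R.
Proof. by apply: fine_ge0; apply: measure_ge0. Qed.

Lemma PDI {d} {M : measurableType d} {R : realType} (P : probability M R) {A B : set M} :
  measurable A -> measurable B -> P A = (P (A `\` B) + P (A `&` B))%E.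
Proof. exact: measureDI. Qed.

Lemma P0 {d} {M : measurableType d} {R : realType} (P : probability M R) :
  P set0 = 0%E.
Proof. exact: measure0. Qed.

Lemma Ple {d} {M : measurableType d} {R : realType} (P : probability M R) {A B : set M} :
  measurable A -> measurable B -> A `<=` B -> (P A <= P B)%E.
Proof. by move=> mA mB AB; apply: le_measure; rewrite ?inE. Qed.

Lemma aeS {d} {M : measurableType d} {R : realType} (P : probability M R) {A B : set M} :
  measurable A -> measurable B -> P (A `\` B) = 0%E -> (P B <= P A)%E ->
  P (B `\` A) = 0%E.
Proof.
move=> mA mB h le.
have e1 := PDI P mA mB. have e2 := PDI P mB mA.
rewrite h add0e in e1. rewrite setIC -e1 in e2. rewrite e2 in le.
have mBA : measurable (B `\` A) by apply: measurableD.
have g0 := fP_ge0 P (B `\` A).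
move: le; rewrite (PE P mBA) (PE P mA) -EFinD lee_fin => le.
by rewrite (PE P mBA); congr EFin; lra.
Qed.

Lemma aeN {d} {M : measurableType d} {R : realType} (P : probability M R) {A B : set M} :
  measurable A -> measurable B -> P (A `\` B) = 0%E -> P (B `\` A) = 0%E ->
  P A = P B.
Proof.
move=> mA mB h1 h2.
by rewrite (PDI P mA mB) (PDI P mB mA) h1 h2 !add0e setIC.
Qed.

Lemma pre_meas {d} {M : measurableType d} {R : realType} (P : probability M R)
  {T : R -> M -> M} : det_system T -> measure_preserving P T ->
  forall t {B}, measurable B -> measurable (T t @^-1` B) /\ P (T t @^-1` B) = P B.
Proof.
move=> [hm _ _] MP t B mB.
have mpre : measurable (T t @^-1` B) by have := hm t measurableT B mB; rewrite setTI.
split => //.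
have [mI PI] := MP t _ mpre.
have [mR PR] := MP t _ measurableT.
have eI : T t @` (T t @^-1` B) = B `&` (T t @` setT).
  apply/seteqP; split => y.
    by move=> [x Bx <-]; split => //; exists x.
  move=> [By [x _ ex]]. exists x => //. by rewrite /preimage/= ex.
rewrite -PI eI.
have h0 : P (setT `\` (T t @` setT)) = 0%E.
  apply: aeS => //; last by rewrite PR.
  by rewrite setDT P0.
apply: aeN => //; first exact: measurableI.
  rewrite (_ : _ `\` _ = set0) ?P0 //.
  by apply/seteqP; split => x //= [[]].
apply/eqP; rewrite eq_le measure_ge0 andbT -h0.
apply: Ple; [apply: measurableD => //; exact: measurableI|apply: measurableD => //|].
by move=> x [Bx nx]; split => // Rx; apply: nx.
Qed.

Lemma NU {d} {M : measurableType d} {R : realType} (P : probability M R) {A B : set M} :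
  P.-negligible A -> P.-negligible B -> P.-negligible (A `|` B).
Proof. exact: negligibleU. Qed.

Lemma NS {d} {M : measurableType d} {R : realType} (P : probability M R) {A B : set M} :
  P.-negligible A -> B `<=` A -> P.-negligible B.
Proof. by move=> h s; apply: (negligibleS s h). Qed.

Lemma NP {d} {M : measurableType d} {R : realType} (P : probability M R) {A : set M} :
  measurable A -> P.-negligible A <-> P A = 0%E.
Proof. exact: negligibleP. Qed.


Lemma pre_negl {d} {M : measurableType d} {R : realType} (P : probability M R)
  {T : R -> M -> M} : det_system T -> measure_preserving P T ->
  forall t {N}, P.-negligible N -> P.-negligible (T t @^-1` N).
Proof.
move=> ds mp t N [B [mB PB NB]].
have [m1 P1] := pre_meas P ds mp t mB.
by exists (T t @^-1` B); split => //; [rewrite P1| move=> x /NB].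
Qed.

Lemma img_negl {d} {M : measurableType d} {R : realType} (P : probability M R)
  {T : R -> M -> M} : measure_preserving P T ->
  forall t {N}, P.-negligible N -> P.-negligible (T t @` N).
Proof.
move=> mp t N [B [mB PB NB]].
have [m1 P1] := mp t _ mB.
exists (T t @` B); split => //; first by rewrite P1.
by move=> y [x /NB Bx <-]; exists x.
Qed.

Lemma img2pre {d} {M : measurableType d} {R : realType} (P : probability M R)
  {T : R -> M -> M} : det_system T -> measure_preserving P T ->
  forall n C, measurable C ->
  P ((T n @` C `\` C) `|` (C `\` T n @` C)) = 0%E ->
  P.-negligible (T n @^-1` C `\` C) /\ P.-negligible (C `\` T n @^-1` C).
Proof.
move=> ds mp n C mC h.
have [mI PI] := mp n _ mC.
have hU : P.-negligible ((T n @` C `\` C) `|` (C `\` T n @` C)).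
  by apply/NP => //; apply: measurableU; apply: measurableD.
have N1 : P.-negligible (T n @` C `\` C) by apply: (NS P hU) => x; left.
have N2 : P.-negligible (C `\` T n @` C) by apply: (NS P hU) => x; right.
have [mpI PpI] := pre_meas P ds mp n mI.
split.
  have N3 : P.-negligible (T n @^-1` (T n @` C) `\` C).
    apply/NP; first exact: measurableD.
    apply: aeS => //.
      by apply/eqP; rewrite -measure_le0 -(measure0 P); apply: le_measure;
        rewrite ?inE//; [apply: measurableD| move=> x [Cx]; case; exists x].
    by rewrite PpI PI.
  apply: (NS P (NU P (pre_negl P ds mp n N2) N3)).
  move=> x [Cx nCx].
  have [[y Cy yx]|nI] := pselect ((T n @` C) (T n x)).
    by right; split => //; exists y.
  by left; split.
apply: (NS P (pre_negl P ds mp n N1)).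
by move=> x [Cx nCx]; split => //; exists x.
Qed.

Lemma pre2img {d} {M : measurableType d} {R : realType} (P : probability M R)
  {T : R -> M -> M} : det_system T -> measure_preserving P T ->
  forall n C, measurable C ->
  P.-negligible (T n @^-1` C `\` C) -> P.-negligible (C `\` T n @^-1` C) ->
  P ((T n @` C `\` C) `|` (C `\` T n @` C)) = 0%E.
Proof.
move=> ds mp n C mC h1 h2.
have [mI PI] := mp n _ mC.
have [mR PR] := mp n _ measurableT.
apply/NP; first by apply: measurableU; apply: measurableD.
have h0 : P.-negligible (setT `\` (T n @` setT)).
  apply/NP; first exact: measurableD.
  apply: aeS => //; last by rewrite PR.
  by rewrite setDT measure0.
apply: (NU P).
  apply: (NS P (img_negl P mp n h2)).
  move=> y [[x Cx <-] nC]; exists x => //; split => //.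
apply: (NS P (NU P (img_negl P mp n h1) h0)).
move=> y [Cy nI].
have [[x _ xy]|nR] := pselect ((T n @` setT) y).
  left; exists x => //; split; first by rewrite /preimage/= xy.
  by move=> Cx; apply: nI; exists x.
by right.
Qed.


Lemma negl_seq {d} {M : measurableType d} {R : realType} (P : probability M R)
  {O : eqType} (s : seq O) (G : O -> set M) (A : set M) :
  (forall x, A x -> exists2 o, o \in s & G o x) ->
  (forall o, o \in s -> P.-negligible (G o)) -> P.-negligible A.
Proof.
elim: s A => [|a s IH] A hA hG.
  apply: (NS P (negligible_set0 P)); by move=> x /hA [y]; rewrite in_nil.
apply: (NS P (NU P (hG a (mem_head _ _))
   (IH [set x | exists2 o, o \in s & G o x] (fun x h => h) _))).
  by move=> o os; apply: hG; rewrite in_cons os orbT.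
move=> x /hA [y]; rewrite in_cons => /orP [/eqP -> Gx|os Gx]; first by left.
by right; exists y.
Qed.

Lemma pigeon {O : eqType} (s : seq O) (f : O -> O) (a : O) :
  a \in s -> (forall x, x \in s -> f x \in s) ->
  exists i m, (0 < m)%N /\ iter (m + i) f a = iter i f a.
Proof.
move=> ain fs.
have ins : forall j, iter j f a \in s by elim => //= j IH; apply: fs.
set l := map (fun j => iter j f a) (iota 0 (size s).+1).
have nu : ~~ uniq l.
  apply/negP => ul.
  have sub : {subset l <= s} by move=> y /mapP [j _ ->]; apply: ins.
  have := uniq_leq_size ul sub.
  by rewrite size_map size_iota ltnn.
have [i [j [ij jl]]] := uniqPn a nu.
have sl : size l = (size s).+1 by rewrite size_map size_iota.
rewrite sl in jl.
rewrite !(nth_map 0%N) ?size_iota ?sl //; last exact: ltn_trans ij jl.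
rewrite !nth_iota ?add0n //; last exact: ltn_trans ij jl.
move=> e; exists i, (j - i)%N; split; first by rewrite subn_gt0.
by rewrite subnK ?(ltnW ij).
Qed.


Lemma dirA (d : measure_display) (M : measurableType d) (R : realType)
  (P : probability M R) (T : R -> M -> M) :
  det_system T -> measure_preserving P T ->
  (~ (exists (n : R) (C : set M),
        [/\ 0 < n, measurable C, (0 < P C)%E, (P C < 1)%E &
            P ((T n @` C `\` C) `|` (C `\` T n @` C)) = 0%E])) ->
   (forall (d' : measure_display) (O : measurableType d') (Phi : M -> O),
      measurable_fun setT Phi -> finite_valued P Phi -> nontrivial_obs Phi ->
      forall k : R, 0 < k -> forall t : R,
        exists oi oj : O,
          0 < cond_prob P T Phi t k oi oj /\ cond_prob P T Phi t k oi oj < 1).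
Proof.
move=> ds mp ha d' O Phi _ [fnt hfib] [u1 [u2 [r1 r2 ne]]] k k0 t.
have [hm law hj] := ds.
apply: contrapT => hn.
have hc : forall oi oj, ~ (0 < cond_prob P T Phi t k oi oj /\ cond_prob P T Phi t k oi oj < 1).
  by move=> oi oj h; apply: hn; exists oi, oj.
pose W s o := [set m | Phi (T s m) = o].
have WF : forall s o, range Phi o -> measurable (W s o) /\
    P (W s o) = P (Phi @^-1` [set o]).
  by move=> s o Vo; apply: (pre_meas P ds mp s (hfib o Vo).1).
have Wpos : forall s o, range Phi o -> (0 < P (W s o))%E.
  by move=> s o Vo; rewrite (WF s o Vo).2; exact: (hfib o Vo).2.
have [sq Vsq] := (finite_seqP _).1 fnt.
have F2 : forall o, range Phi o -> exists o', range Phi o' /\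
    P.-negligible (W t o `\` W (t + k) o').
  move=> o Vo; apply: contrapT => hno.
  have hS : forall o', o' \in sq -> P.-negligible (W (t + k) o' `&` W t o).
    move=> o' o's.
    have Vo' : range Phi o' by rewrite Vsq.
    have [mW PW] := WF t o Vo.
    have [mW' PW'] := WF (t + k) o' Vo'.
    have mS : measurable (W (t + k) o' `&` W t o) by exact: measurableI.
    apply/(NP P mS).
    have [->//|nz] := pselect (P (W (t + k) o' `&` W t o) = 0%E).
    exfalso; apply: hno; exists o'; split => //.
    have mD : measurable (W t o `\` W (t + k) o') by exact: measurableD.
    apply/(NP P mD).
    have Sp : (0 < fine (P (W (t + k) o' `&` W t o)))%R.
      rewrite lt_def fP_ge0 andbT; apply/eqP => h0; apply: nz.
      by rewrite (PE P mS) h0.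
    have Wp : (0 < fine (P (W t o)))%R.
      by have := Wpos t o Vo; rewrite (PE P mW) lte_fin.
    have h := hc o o'; rewrite /cond_prob in h.
    have c0 : 0 < fine (P (W (t + k) o' `&` W t o)) / fine (P (W t o)).
      by apply: divr_gt0.
    have c1' : 1 <= fine (P (W (t + k) o' `&` W t o)) / fine (P (W t o)).
      by rewrite leNgt; apply/negP => c1; apply: h; split.
    have c1 : fine (P (W t o)) <= fine (P (W (t + k) o' `&` W t o)).
      by move: c1'; rewrite ler_pdivlMr // mul1r.
    have e := PDI P mW mW'.
    rewrite setIC in c1.
    have g0 := fP_ge0 P (W t o `\` W (t + k) o').
    move: e; rewrite (PE P mW) (PE P mD) (PE P (measurableI _ _ mW mW')) -EFinD.
    case=> e2.
    by rewrite (PE P mD); congr EFin; lra.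
  have := Wpos t o Vo.
  have [mW _] := WF t o Vo.
  suff : P.-negligible (W t o) by move=> /(NP P mW) ->; rewrite ltxx.
  apply: (negl_seq P sq (fun o' => W (t + k) o' `&` W t o) (W t o) _ hS).
  move=> x Wx; exists (Phi (T (t + k) x)) => //.
  have : range Phi (Phi (T (t + k) x)) by exists (T (t + k) x).
  by rewrite Vsq.
have [f hf] : {f : O -> O & forall o, range Phi o ->
    range Phi (f o) /\ P.-negligible (W t o `\` W (t + k) (f o))}.
  apply: (@choice _ _ (fun o o' => range Phi o ->
     range Phi o' /\ P.-negligible (W t o `\` W (t + k) o'))) => o.
  have [hV|hnV] := pselect (range Phi o); last by exists o.
  by have [w2 h] := F2 o hV; exists w2.
have chain : forall a, range Phi a -> forall m,
    range Phi (iter m f a) /\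
    P.-negligible (W t a `\` W (t + m%:R * k) (iter m f a)).
  move=> a Va; elim => [|m [Vb IH]].
    split => //=; rewrite mul0r addr0.
    by apply: (NS P (negligible_set0 P)) => x [h1 h2]; exact: h2 h1.
  have [Vfb hfb] := hf _ Vb.
  split; first by rewrite iterS.
  set u := m%:R * k.
  have N2 := pre_negl P ds mp u hfb.
  apply: (NS P (NU P IH N2)) => x [Wa nW].
  have e1 : Phi (T t (T u x)) = Phi (T (t + u) x) by rewrite -law (addrC u t).
  have e' : u + (t + k) = t + m.+1%:R * k.
    by rewrite /u -addn1 natrD mulrDl mul1r; ring.
  have e2 : Phi (T (t + k) (T u x)) = Phi (T (t + m.+1%:R * k) x).
    by rewrite -law e'.
  have [Wb|nWb] := pselect (W (t + u) (iter m f a) x).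
    right; split; first by rewrite /W /= e1.
    by rewrite /W /= e2 -iterS.
  by left; split.
have u1s : u1 \in sq by move: r1; rewrite Vsq.
have fs : forall x, x \in sq -> f x \in sq.
  move=> x xs; have Vx : range Phi x by rewrite Vsq.
  by have := (hf x Vx).1; rewrite Vsq.
have [i [m [m0 em]]] := pigeon sq f u1 u1s fs.
set b := iter i f u1.
have Vb : range Phi b by have := (chain u1 r1 i).1.
have emb : iter m f b = b by rewrite /b -iterD.
have [_ Nb] := chain b Vb m; rewrite emb in Nb.
set n := m%:R * k.
have [mC PC] := WF t b Vb.
have [mC' PC'] := WF (t + n) b Vb.
have Nb' : P.-negligible (W (t + n) b `\` W t b).
  apply/(NP P (measurableD mC' mC)); apply: aeS => //.
    by apply/(NP P (measurableD mC mC')).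
  by rewrite PC PC'.
have eTC : T n @^-1` W t b = W (t + n) b.
  by apply/seteqP; split => x; rewrite /W /preimage /= -law (addrC n t).
apply: ha; exists n, (W t b); split => //.
- by apply: mulr_gt0 => //; rewrite ltr0n.
- exact: Wpos.
- have [c [Vc cb]] : exists c, range Phi c /\ c <> b.
    have [e|e] := pselect (b = u1); first by exists u2; split => //; rewrite e; apply/nesym.
    by exists u1; split => //; apply/nesym.
  have [mD PD] := WF t c Vc.
  have sub : W t b `<=` ~` W t c by move=> x; rewrite /W /= => -> /esym.
  have le := Ple P mC (measurableC mD) sub.
  rewrite (probability_setC P mD) in le.
  have := Wpos t c Vc.
  move: le; rewrite (PE P mD) (PE P mC) lte_fin -EFinB lee_fin lte_fin => le lt.
  lra.
- by apply: (pre2img P ds mp n _ mC); rewrite eTC.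
Qed.


Lemma dirB (d : measure_display) (M : measurableType d) (R : realType)
  (P : probability M R) (T : R -> M -> M) :
  det_system T -> measure_preserving P T ->
   (forall (d' : measure_display) (O : measurableType d') (Phi : M -> O),
      measurable_fun setT Phi -> finite_valued P Phi -> nontrivial_obs Phi ->
      forall k : R, 0 < k -> forall t : R,
        exists oi oj : O,
          0 < cond_prob P T Phi t k oi oj /\ cond_prob P T Phi t k oi oj < 1) ->
  (~ (exists (n : R) (C : set M),
        [/\ 0 < n, measurable C, (0 < P C)%E, (P C < 1)%E &
            P ((T n @` C `\` C) `|` (C `\` T n @` C)) = 0%E])).
Proof.
move=> ds mp hb [n [C [n0 mC PC0 PC1 hC]]].
have [hm law hj] := ds.
pose Phi (m : M) := `[< C m >].
pose E (b : bool) := if b then C else ~` C.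
have fib : forall b, Phi @^-1` [set b] = E b.
  move=> b; apply/seteqP; split => x; rewrite /Phi /E /preimage /=;
    by case: b; case: asboolP.
have mE : forall b, measurable (E b) by case => //=; exact: measurableC.
have PE0 : forall b, (0 < P (E b))%E.
  case => //=; rewrite (probability_setC P mC).
  move: PC1; rewrite (PE P mC) lte_fin -EFinB lte_fin => h; lra.
have nE : forall b, exists x, E b x.
  move=> b; apply: contrapT => hne.
  suff : E b = set0 by move=> e; have := PE0 b; rewrite e measure0 ltxx.
  by apply/seteqP; split => x // Ex; apply: hne; exists x.
have mPhi : measurable_fun setT Phi.
  by apply: (measurable_fun_bool true); rewrite setTI fib.
have fv : finite_valued P Phi.
  split; first exact: finite_finset.
  by move=> b _; rewrite fib; split.
have nt : nontrivial_obs Phi.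
  have [x1 Ex1] := nE true; have [x2 Ex2] := nE false.
  exists true, false; split => //.
    by exists x1 => //; have := fib true; rewrite -/(E true) => e;
      move: Ex1; rewrite -e.
  by exists x2 => //; have := fib false => e; move: Ex2; rewrite -e.
have [oi [oj [c0 c1]]] := hb _ _ Phi mPhi fv nt n n0 0.
have [N1 N2] := img2pre P ds mp n C mC hC.
have NE : forall b, P.-negligible (T n @^-1` E b `\` E b) /\
                    P.-negligible (E b `\` T n @^-1` E b).
  case => //=; split.
    apply: (NS P N2) => x [nTC nC]; split => //; exact: contrapT.
  by apply: (NS P N1) => x [nC TC]; split => //; exact: contrapT.
have fibP : forall b y, Phi y = b <-> E b y by move=> b y; rewrite -fib.
have mA : measurable (T n @^-1` E oj `&` E oi).
  by apply: measurableI => //; exact: (pre_meas P ds mp n (mE oj)).1.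
have eS : [set m | Phi (T (0 + n) m) = oj /\ Phi (T 0 m) = oi] =
    T 0 @^-1` (T n @^-1` E oj `&` E oi).
  apply/seteqP; split => x; rewrite /preimage /= law => -[h1 h2];
    by split; apply/fibP.
have eW : [set m | Phi (T 0 m) = oi] = T 0 @^-1` E oi.
  by apply/seteqP; split => x; rewrite /preimage /= => /fibP.
move: c0 c1; rewrite /cond_prob eS eW (pre_meas P ds mp 0 mA).2
  (pre_meas P ds mp 0 (mE oi)).2.
have [eij|nij] := pselect (oj = oi).
  subst oj.
  have -> : P (T n @^-1` E oi `&` E oi) = P (E oi).
    apply: aeN => //.
      by rewrite (_ : _ `\` _ = set0) ?P0 //; apply/seteqP; split => x // [[]].
    apply/(NP P (measurableD (mE oi) mA)).
    by apply: (NS P (NE oi).2) => x [Ex nA]; split => // TE; apply: nA.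
  have := PE0 oi; rewrite (PE P (mE oi)) lte_fin => hp.
  by rewrite divff ?ltxx // gt_eqF.
have -> : P (T n @^-1` E oj `&` E oi) = 0%E.
  apply/(NP P mA); apply: (NS P (NE oj).1) => x [TE Ei]; split => // Ej.
  have disj : forall a b y, E a y -> E b y -> a = b.
    by case; case => //= y; tauto.
  exact: nij (disj _ _ _ Ej Ei).
by rewrite /= mul0r ltxx.
Qed.


Theorem theorem1 (d : measure_display) (M : measurableType d) (R : realType)
  (P : probability M R) (T : R -> M -> M) :
  det_system T -> measure_preserving P T ->
  (~ (exists (n : R) (C : set M),
        [/\ 0 < n, measurable C, (0 < P C)%E, (P C < 1)%E &
            P ((T n @` C `\` C) `|` (C `\` T n @` C)) = 0%E])
   <->
   (forall (d' : measure_display) (O : measurableType d') (Phi : M -> O),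
      measurable_fun setT Phi -> finite_valued P Phi -> nontrivial_obs Phi ->
      forall k : R, 0 < k -> forall t : R,
        exists oi oj : O,
          0 < cond_prob P T Phi t k oi oj /\ cond_prob P T Phi t k oi oj < 1)).
Proof.
move=> ds mp; split; [exact: dirA | exact: dirB].
Qed.
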